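(* Let $G$ be a connected undirected graph with positive edge weights, Laplacian $\mathbf{L}$ and degree matrix $\mathbf{D}$, such that the second smallest eigenvalue of its normalised Laplacian $\mathbf{D}^{-1/2}\mathbf{L}\mathbf{D}^{-1/2}$ is $\nu_2$. Let $C\subseteq V$ be a set of vertices with $F=V\setminus C$ nonempty and $|C|\ge 2$, let $\mathbf{S}=\mathbf{Sc}(\mathbf{L},C)$ be the Schur complement of $\mathbf{L}$ onto $C$, and let $\mathbf{D_C}$ be the restriction of $\mathbf{D}$ to $C$ (the original degrees). Then $\lambda_2(\mathbf{D_C}^{-1/2}\mathbf{S}\mathbf{D_C}^{-1/2})\ge\nu_2$.
   Context: Writing $\mathbf{L}=\begin{pmatrix}\mathbf{F}&\mathbf{B}\\ \mathbf{B}^\top&\mathbf{C}\end{pmatrix}$ with blocks indexed by $F$ and $C$, the Schur complement is $\mathbf{Sc}(\mathbf{L},C)=\mathbf{C}-\mathbf{B}^\top\mathbf{F}^{-1}\mathbf{B}$. $\lambda_2(\cdot)$ denotes the second smallest eigenvalue of a symmetric matrix. *)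

(* Defs.v *)
From HB Require Import structures.
From mathcomp Require Import all_boot all_order all_algebra.
From mathcomp Require Import reals.
Set Implicit Arguments. Unset Strict Implicit. Unset Printing Implicit Defensive.
Import Order.TTheory GRing.Theory Num.Theory.
Local Open Scope ring_scope.

Section Defs.
Variable R : realType.

(* An undirected weighted graph on vertex set 'I_n given by its weight matrix:
   symmetric, nonnegative, no self-loops; {i,j} is an edge iff 0 < w i j
   (so every edge has positive weight). *)
Definition weighted_graph n (w : 'M[R]_n) : Prop :=
  [/\ forall i j, w i j = w j i, forall i j, 0 <= w i j & forall i, w i i = 0].

Definition wconnected n (w : 'M[R]_n) : Prop :=
  forall i j : 'I_n, connect [rel a b | 0 < w a b] i j.

Definition deg n (w : 'M[R]_n) (i : 'I_n) : R := \sum_j w i j.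

Definition degmx n (w : 'M[R]_n) : 'M[R]_n := diag_mx (\row_i deg w i).
Definition laplacian n (w : 'M[R]_n) : 'M[R]_n := degmx w - w.

Definition invsqrt_deg n (w : 'M[R]_n) : 'M[R]_n :=
  diag_mx (\row_i (Num.sqrt (deg w i))^-1).

Definition normalized_laplacian n (w : 'M[R]_n) : 'M[R]_n :=
  invsqrt_deg w *m laplacian w *m invsqrt_deg w.

Definition block_on n (A B : {set 'I_n}) (M : 'M[R]_n) : 'M[R]_(#|A|, #|B|) :=
  \matrix_(i, j) M (enum_val i) (enum_val j).

Definition schur n (M : 'M[R]_n) (C : {set 'I_n}) : 'M[R]_#|C| :=
  block_on C C M
  - block_on C (~: C) M *m invmx (block_on (~: C) (~: C) M) *m block_on (~: C) C M.

Definition invsqrt_deg_on n (w : 'M[R]_n) (C : {set 'I_n}) : 'M[R]_#|C| :=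
  diag_mx (\row_i (Num.sqrt (deg w (enum_val i)))^-1).

(* s is the list of eigenvalues of M, counted with multiplicity, in
   nondecreasing order: the characteristic polynomial of M splits with roots s. *)
Definition is_spectrum m (M : 'M[R]_m) (s : seq R) : Prop :=
  sorted <=%R s /\ char_poly M = \prod_(x <- s) ('X - x%:P).

End Defs.

(* Main.v *)
Require Import Defs.
From HB Require Import structures.
From mathcomp Require Import all_boot all_order all_algebra.
From mathcomp Require Import reals complex ring.
Import Order.TTheory GRing.Theory Num.Theory.
Local Open Scope ring_scope.
Local Open Scope sesquilinear_scope.
Set Implicit Arguments. Unset Strict Implicit. Unset Printing Implicit Defensive.

Section S.
Variable R : realType.
Local Notation K := (R[i]).
Local Notation RC := (real_complex R).

Lemma RC_real (x : R) : RC x \is Num.real.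
Proof. by apply/complex_realP; exists x. Qed.

Lemma conj_RC (x : R) : Num.conj (RC x) = RC x.
Proof. exact/conj_Creal/RC_real. Qed.

Set Printing Coercions.
Lemma char_poly_conj m (P D : 'M[K]_m) : P \in unitmx ->
  char_poly (invmx P *m D *m P) = char_poly D.
Proof.
move=> Pu; rewrite /char_poly /char_poly_mx.
set P' := map_mx polyC P; set Pi := map_mx polyC (invmx P).
have PiP : Pi *m P' = 1%:M by rewrite -map_mxM mulVmx // map_mx1.
have -> : ('X%:M - map_mx polyC (invmx P *m D *m P)) = Pi *m ('X%:M - map_mx polyC D) *m P'.
  have E1 : Pi *m 'X%:M *m P' = 'X%:M by rewrite scalar_mxC -mulmxA PiP mulmx1.
  by rewrite mulmxBr mulmxBl E1 /Pi /P' -!map_mxM.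
by rewrite !det_mulmx mulrAC -det_mulmx PiP det1 mul1r.
Qed.


Lemma spec_pack m (M : 'M[R]_m) s : M^T = M -> is_spectrum M s ->
  exists P : 'M[K]_m, exists d : 'I_m -> R,
   [/\ P \is unitarymx, map_mx RC M = P^t* *m diag_mx (\row_i RC (d i)) *m P
     & perm_eq s [seq d i | i <- enum 'I_m]].
Proof.
move=> Msym [_ Hs].
set Mk := map_mx RC M.
have Mh : Mk \is hermsymmx.
  apply: realsym_hermsym.
    apply/is_hermitianmxP; rewrite expr0 scale1r /Mk map_trmx Msym.
    by apply/matrixP => i j; rewrite !mxE.
  by apply/mxOverP => i j; rewrite mxE RC_real.
have /hermitian_normalmx /orthomx_spectralP Mdec := Mh.
have dreal := hermitian_spectral_diag_real Mh.
set P := spectralmx Mk in Mdec; set dd := spectral_diag Mk in Mdec dreal.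
exists P, (fun i => complex.Re (dd 0 i)).
have Pu : P \is unitarymx by apply: spectral_unitarymx.
have ddE : \row_i RC (complex.Re (dd 0 i)) = dd.
  apply/rowP => i; rewrite mxE; apply: RRe_real.
  by move/mxOverP: dreal; apply.
rewrite ddE -invmx_unitary //; split => //.
have := map_char_poly RC M; rewrite -/Mk Mdec char_poly_conj ?unitarymx_unit //.
rewrite [char_poly (diag_mx _)]char_poly_trig ?diag_mx_is_trig // Hs => E.
apply: prod_XsubC_eq; apply: (map_poly_inj RC).
rewrite E big_map big_enum /= rmorph_prod.
apply: eq_bigr => i _; rewrite mxE eqxx mulr1n rmorphB /= map_polyX map_polyC /=.
by rewrite RRe_real //; move/mxOverP: dreal; apply.
Qed.
Lemma cnt (T:finType) (p:pred T): count p (enum T) = #|p|.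
Proof. rewrite cardE -size_filter /enum_mem -filter_predI. congr (size _).
by apply: eq_filter => x; rewrite /= !inE andbT. Qed.

Lemma low_idx m (d : 'I_m -> R) s : sorted <=%R s ->
  perm_eq s [seq d i | i <- enum 'I_m] -> (1 < size s)%N ->
  exists k : 'I_m, forall i, i != k -> s`_1 <= d i.
Proof.
move=> ss ps sz.
have Hc : (#|[pred i | (d i < s`_1)%R]| <= 1)%N.
  rewrite -cnt.
  have E : count [pred i | (d i < s`_1)%R] (enum (ordinal m)) = count (fun x => (x < s`_1)%R) [seq d i | i <- enum (ordinal m)].
    by rewrite [in RHS]count_map.
  rewrite E {E}.
  rewrite -(permP ps).
  case: s ss ps sz => [|a [|b t]] //= ss _ _.
  rewrite ltxx /= add0n.
  have /le_path_min Hb : path <=%R b t by case/andP: ss.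
  have -> : count (fun x => x < b) t = 0%N.
    apply/eqP; rewrite -leqn0 leqNgt -has_count; apply/hasPn => x /(allP Hb).
    by rewrite /= -leNgt.
  by case: (a < b).
case: (pickP [pred i | (d i < s`_1)%R]) => [k Hk | H0].
  exists k => i ik; rewrite leNgt; apply/negP => Hi.
  have : (1 < #|[pred i | (d i < s`_1)%R]|)%N.
    by apply/card_gt1P; exists i, k; split.
  by rewrite ltnNge Hc.
have m0 : (0 < m)%N.
  by move: (perm_size ps); rewrite size_map size_enum_ord => <-; apply: ltnW.
exists (Ordinal m0) => i _; rewrite leNgt; apply/negP => Hi.
by move: (H0 i); rewrite /= Hi.
Qed.

Lemma up_idx m (d : 'I_m -> R) s : sorted <=%R s ->
  perm_eq s [seq d i | i <- enum 'I_m] -> (1 < size s)%N ->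
  exists j1 j2 : 'I_m, [/\ j1 != j2, d j1 <= s`_1 & d j2 <= s`_1].
Proof.
move=> ss ps sz.
have Hc : (1 < #|[pred i | (d i <= s`_1)%R]|)%N.
  rewrite -cnt.
  have E : count [pred i | (d i <= s`_1)%R] (enum (ordinal m)) = count (fun x => (x <= s`_1)%R) [seq d i | i <- enum (ordinal m)].
    by rewrite [in RHS]count_map.
  rewrite E {E}.
  rewrite -(permP ps).
  case: s ss ps sz => [|a [|b t]] //= ss _ _.
  have ab : a <= b by case/andP: ss.
  by rewrite ab lexx.
case/card_gt1P: Hc => j1 [j2 [H1 H2 H12]].
by exists j1, j2.
Qed.

Definition qf m (M : 'M[K]_m) (x : 'rV[K]_m) : K := (x *m M *m x^t*) 0 0.
Definition nrm m (x : 'rV[K]_m) : K := (x *m x^t*) 0 0.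

Lemma diag_form m (c dv : 'rV[K]_m) :
  (c *m diag_mx dv *m c^t*) 0 0 = \sum_i dv 0 i * (c 0 i * Num.conj (c 0 i)).
Proof.
rewrite mxE; apply: eq_bigr => i _; rewrite mul_mx_diag !mxE.
by rewrite mulrAC mulrC.
Qed.

Lemma nrm_form m (c : 'rV[K]_m) : nrm c = \sum_i c 0 i * Num.conj (c 0 i).
Proof. by rewrite /nrm mxE; apply: eq_bigr => i _; rewrite !mxE. Qed.

Lemma ct_mul m n p (A : 'M[K]_(m, n)) (B : 'M[K]_(n, p)) : (A *m B)^t* = B^t* *m A^t*.
Proof. by rewrite trmx_mul map_mxM. Qed.

Lemma decomp_qf m (P : 'M[K]_m) dv Mk x : P \is unitarymx ->
  Mk = P^t* *m diag_mx dv *m P ->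
  qf Mk x = ((x *m P^t*) *m diag_mx dv *m (x *m P^t*)^t*) 0 0.
Proof.
move=> Pu ->; rewrite /qf ct_mul trmxCK !mulmxA.
done.
Qed.

Lemma decomp_nrm m (P : 'M[K]_m) x : P \is unitarymx ->
  nrm x = nrm (x *m P^t*).
Proof.
move=> Pu; rewrite /nrm ct_mul trmxCK mulmxA mulmxKtV //.
Qed.

Lemma ray_low m (P : 'M[K]_m) (d : 'I_m -> R) Mk (b : R) k x :
  P \is unitarymx -> Mk = P^t* *m diag_mx (\row_i RC (d i)) *m P ->
  (forall i, i != k -> b <= d i) -> (x *m P^t*) 0 k = 0 ->
  RC b * nrm x <= qf Mk x.
Proof.
move=> Pu Md Hb Hk; rewrite (decomp_qf _ Pu Md) (decomp_nrm _ Pu).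
move: Hk; set c := x *m P^t* => Hk.
rewrite diag_form nrm_form mulr_sumr; apply: ler_sum => i _.
have -> : (\row_j RC (d j)) 0 i = RC (d i) by rewrite mxE.
case: (eqVneq i k) => [-> | ik]; first by rewrite Hk !mul0r !mulr0.
by apply: ler_wpM2r; [exact: mul_conjC_ge0 | rewrite lecR; apply: Hb].
Qed.

Lemma ray_up m (P : 'M[K]_m) (d : 'I_m -> R) Mk (b : R) j1 j2 (c : 'rV[K]_m) :
  P \is unitarymx -> Mk = P^t* *m diag_mx (\row_i RC (d i)) *m P ->
  (forall i, i != j1 -> i != j2 -> c 0 i = 0) -> d j1 <= b -> d j2 <= b ->
  qf Mk (c *m P) <= RC b * nrm (c *m P).
Proof.
move=> Pu Md Hc H1 H2; rewrite (decomp_qf _ Pu Md) (decomp_nrm _ Pu) mulmxtVK //.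
rewrite diag_form nrm_form mulr_sumr; apply: ler_sum => i _.
have -> : (\row_j RC (d j)) 0 i = RC (d i) by rewrite mxE.
case: (eqVneq i j1) => [-> | i1]; last case: (eqVneq i j2) => [-> | i2].
- by apply: ler_wpM2r; [exact: mul_conjC_ge0 | rewrite lecR].
- by apply: ler_wpM2r; [exact: mul_conjC_ge0 | rewrite lecR].
- by rewrite Hc // !mul0r !mulr0.
Qed.
End S.

Section G.
Variable R : realType.
Variable n : nat.

Definition EC (A : {set 'I_n}) : 'M[R]_(#|A|, n) := \matrix_(i, v) (enum_val i == v)%:R.

Lemma ECmul (A : {set 'I_n}) m (M : 'M[R]_(n, m)) :
  EC A *m M = \matrix_(i, v) M (enum_val i) v.
Proof.
apply/matrixP => i v; rewrite !mxE (bigD1 (enum_val i)) //= mxE eqxx mul1r.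
rewrite big1 ?addr0 // => u uneq; by rewrite mxE eq_sym (negbTE uneq) mul0r.
Qed.

Lemma mulECt (A : {set 'I_n}) m (M : 'M[R]_(m, n)) :
  M *m (EC A)^T = \matrix_(i, v) M i (enum_val v).
Proof.
apply: trmx_inj; rewrite trmx_mul trmxK ECmul.
by apply/matrixP => i j; rewrite !mxE.
Qed.

Lemma block_onE (A B : {set 'I_n}) (M : 'M[R]_n) :
  block_on A B M = EC A *m M *m (EC B)^T.
Proof. by rewrite mulECt ECmul; apply/matrixP => i j; rewrite !mxE. Qed.

Lemma ECECt (A : {set 'I_n}) : EC A *m (EC A)^T = 1%:M.
Proof.
rewrite mulECt; apply/matrixP => i j; rewrite !mxE.
by rewrite (inj_eq enum_val_inj).
Qed.

Lemma ECFt (A : {set 'I_n}) : EC A *m (EC (~: A))^T = 0.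
Proof.
rewrite mulECt; apply/matrixP => i j; rewrite !mxE.
case: eqP => // E; have := enum_valP j; rewrite -E inE.
by rewrite (enum_valP i).
Qed.

Lemma block_diag (A : {set 'I_n}) (dv : 'rV[R]_n) :
  block_on A A (diag_mx dv) = diag_mx (\row_i dv 0 (enum_val i)).
Proof.
apply/matrixP => i j; rewrite !mxE (inj_eq enum_val_inj).
by case: eqP => // ->.
Qed.

Lemma block_diag0 (A : {set 'I_n}) (dv : 'rV[R]_n) :
  block_on A (~: A) (diag_mx dv) = 0.
Proof.
apply/matrixP => i j; rewrite !mxE.
case: eqP => // E; have := enum_valP j; rewrite -E inE.
by rewrite (enum_valP i).
Qed.

Lemma tr_block (A B : {set 'I_n}) (M : 'M[R]_n) :
  (block_on A B M)^T = block_on B A M^T.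
Proof. by apply/matrixP => i j; rewrite !mxE. Qed.

Lemma zm4 (V : zmodType) (a b c d : V) : a - b - (c - d) = a - c - b + d.
Proof. by rewrite opprB addrA addrAC (addrAC a (-b)). Qed.

Lemma sandwich m (P Q : 'M[R]_(m, n)) (M : 'M[R]_n) :
  (P - Q) *m M *m (P - Q)^T =
  P *m M *m P^T - P *m M *m Q^T - Q *m M *m P^T + Q *m M *m Q^T.
Proof.
by rewrite linearB /= mulmxBl mulmxBr !mulmxBl zm4.
Qed.


Definition Gm (M : 'M[R]_n) (C : {set 'I_n}) :=
  block_on C (~:C) M *m invmx (block_on (~:C) (~:C) M).
Definition Zm (M : 'M[R]_n) (C : {set 'I_n}) : 'M[R]_(#|C|, n) :=
  EC C - Gm M C *m EC (~:C).

Lemma sand_terms m (C : {set 'I_n}) (Gx : 'M[R]_(m, #|~:C|)) (M : 'M[R]_n) :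
  Gx *m EC (~: C) *m M *m (Gx *m EC (~:C))^T = Gx *m block_on (~:C) (~:C) M *m Gx^T
  /\ Gx *m EC (~: C) *m M *m (EC C)^T = Gx *m block_on (~:C) C M
  /\ EC C *m M *m (Gx *m EC (~:C))^T = block_on C (~:C) M *m Gx^T.
Proof.
rewrite !block_onE trmx_mul !mulmxA; split => //; split => //.
Qed.

Lemma schur_id (M : 'M[R]_n) (C : {set 'I_n}) : M^T = M ->
  block_on (~:C) (~:C) M \in unitmx -> Zm M C *m M *m (Zm M C)^T = schur M C.
Proof.
move=> MT Mu; rewrite /Zm sandwich.
have [t4 [t3 t2]] := sand_terms (Gm M C) M.
rewrite t4 t3 t2 -block_onE.
have -> : Gm M C *m block_on (~: C) (~: C) M = block_on C (~:C) M by rewrite /Gm mulmxKV.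
by rewrite addrAC subrK.
Qed.


Lemma diag_mul m (a b : 'rV[R]_m) :
  diag_mx a *m diag_mx b = diag_mx (\row_i (a 0 i * b 0 i)).
Proof.
rewrite mul_diag_mx; apply/matrixP => i j; rewrite !mxE.
by case: eqP => [->|_]; rewrite ?mulr1n ?mulr0n ?mulr0.
Qed.

Variable w : 'M[R]_n.
Hypothesis degpos : forall i, 0 < deg w i.

Definition Dsq : 'M[R]_n := diag_mx (\row_v Num.sqrt (deg w v)).

Lemma Dsq_inv : Dsq *m invsqrt_deg w = 1%:M.
Proof.
rewrite /Dsq /invsqrt_deg diag_mul; apply/matrixP => i j; rewrite !mxE.
by rewrite mulfV // gt_eqF // sqrtr_gt0.
Qed.

Lemma inv_Dsq : invsqrt_deg w *m Dsq = 1%:M.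
Proof.
rewrite /Dsq /invsqrt_deg diag_mul; apply/matrixP => i j; rewrite !mxE.
by rewrite mulVf // gt_eqF // sqrtr_gt0.
Qed.

Lemma Dsq_Dsq : Dsq *m Dsq^T = degmx w.
Proof.
rewrite tr_diag_mx /Dsq diag_mul; apply/matrixP => i j; rewrite !mxE.
by rewrite -expr2 sqr_sqrtr // ltW.
Qed.

Lemma Dc_id (C : {set 'I_n}) :
  invsqrt_deg_on w C *m block_on C C (degmx w) *m invsqrt_deg_on w C = 1%:M.
Proof.
rewrite /degmx block_diag /invsqrt_deg_on !diag_mul; apply/matrixP => i j; rewrite !mxE.
rewrite mulrAC -expr2 exprVn sqr_sqrtr ?ltW // mulVf // gt_eqF //.
Qed.

Definition Wm (C : {set 'I_n}) : 'M[R]_(#|C|, n) :=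
  invsqrt_deg_on w C *m Zm (laplacian w) C *m Dsq.

Lemma lap_sym : (forall i j, w i j = w j i) -> (laplacian w)^T = laplacian w.
Proof.
move=> ws; rewrite /laplacian linearB /= tr_diag_mx.
congr (_ - _); apply/matrixP => i j; rewrite !mxE; exact: ws.
Qed.

Lemma W_A (C : {set 'I_n}) : (forall i j, w i j = w j i) ->
  block_on (~:C) (~:C) (laplacian w) \in unitmx ->
  Wm C *m normalized_laplacian w *m (Wm C)^T =
  invsqrt_deg_on w C *m schur (laplacian w) C *m invsqrt_deg_on w C.
Proof.
move=> ws Lu; rewrite -schur_id ?lap_sym //.
rewrite /Wm /normalized_laplacian !trmx_mul /Dsq /invsqrt_deg_on !tr_diag_mx -/Dsq.
rewrite !mulmxA -[_ *m Dsq *m invsqrt_deg w]mulmxA Dsq_inv mulmx1.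
rewrite -[_ *m invsqrt_deg w *m Dsq]mulmxA inv_Dsq mulmx1.
done.
Qed.


Lemma block_diag0' (A : {set 'I_n}) (dv : 'rV[R]_n) :
  block_on (~: A) A (diag_mx dv) = 0.
Proof.
apply/matrixP => i j; rewrite !mxE.
case: eqP => // E; have := enum_valP i; rewrite E inE.
by rewrite (enum_valP j).
Qed.

Definition Hm (C : {set 'I_n}) := invsqrt_deg_on w C *m Gm (laplacian w) C.

Lemma W_W (C : {set 'I_n}) :
  Wm C *m (Wm C)^T = 1%:M + Hm C *m block_on (~:C) (~:C) (degmx w) *m (Hm C)^T.
Proof.
have E : Zm (laplacian w) C *m degmx w *m (Zm (laplacian w) C)^T =
   block_on C C (degmx w) + Gm (laplacian w) C *m block_on (~:C) (~:C) (degmx w) *m (Gm (laplacian w) C)^T.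
  rewrite /Zm sandwich.
  have [t4 [t3 t2]] := sand_terms (Gm (laplacian w) C) (degmx w).
  rewrite t4 t3 t2 -block_onE /degmx block_diag0 block_diag0' mulmx0 mul0mx !subr0.
  done.
transitivity (invsqrt_deg_on w C *m (Zm (laplacian w) C *m degmx w *m (Zm (laplacian w) C)^T) *m invsqrt_deg_on w C).
  rewrite /Wm !trmx_mul !mulmxA -[_ *m Dsq *m Dsq^T]mulmxA Dsq_Dsq.
  by rewrite {2}/invsqrt_deg_on tr_diag_mx.
rewrite E mulmxDr mulmxDl Dc_id; congr (_ + _).
rewrite /Hm !trmx_mul /invsqrt_deg_on tr_diag_mx !mulmxA.
done.
Qed.

End G.


Section K.
Variable R : realType.
Local Notation K := (R[i]).
Local Notation RC := (real_complex R).
Variable n : nat.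
Variable w : 'M[R]_n.
Hypothesis ws : forall i j, w i j = w j i.

Lemma lap_form (z : 'rV[K]_n) :
  qf (map_mx RC (laplacian w)) z *+ 2 =
  \sum_u \sum_v RC (w u v) * ((z 0 u - z 0 v) * Num.conj (z 0 u - z 0 v)).
Proof.
set a := fun u => z 0 u; set b := fun u => Num.conj (z 0 u).
set D := \sum_u RC (deg w u) * (a u * b u).
set S3 := \sum_u \sum_v RC (w u v) * (a u * b v).
have hqf : qf (map_mx RC (laplacian w)) z = D - S3.
  rewrite /qf mxE.
  have -> : \sum_v (z *m map_mx RC (laplacian w)) 0 v * (z^t*) v 0 =
            \sum_u \sum_v a u * RC (laplacian w u v) * b v.
    rewrite exchange_big; apply: eq_bigr => v _; rewrite !mxE mulr_suml.
    by apply: eq_bigr => u _; rewrite !mxE.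
  rewrite /D /S3 -sumrB; apply: eq_bigr => u _.
  rewrite (bigD1 u) //= [X in _ = _ - X](bigD1 u) //= addrC.
  rewrite (eq_bigr (fun i => - (RC (w u i) * (a u * b i)))) => [|i iu]; last first.
    by rewrite /laplacian /degmx !mxE eq_sym (negbTE iu) mulr0n sub0r rmorphN /=; ring.
  rewrite sumrN /laplacian /degmx !mxE eqxx mulr1n rmorphB /=; ring.
have hr : \sum_u \sum_v RC (w u v) * ((z 0 u - z 0 v) * Num.conj (z 0 u - z 0 v))
   = D + D - S3 - S3.
  have E1 : \sum_u \sum_v RC (w u v) * (a u * b u) = D.
    by apply: eq_bigr => u _; rewrite -mulr_suml /deg rmorph_sum.
  have E2 : \sum_u \sum_v RC (w u v) * (a v * b v) = D.
    rewrite exchange_big; apply: eq_bigr => v _; rewrite -mulr_suml /deg rmorph_sum.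
    by congr (_ * _); apply: eq_bigr => u _; rewrite ws.
  have E4 : \sum_u \sum_v RC (w u v) * (a v * b u) = S3.
    by rewrite exchange_big /S3; apply: eq_bigr => v _; apply: eq_bigr => u _; rewrite ws.
  rewrite -{1}E1 -{1}E2 -{1}E4 /S3 -big_split -!sumrB; apply: eq_bigr => u _.
  rewrite -big_split -!sumrB; apply: eq_bigr => v _ /=.
  by rewrite rmorphB /= /a /b; ring.
by rewrite hr hqf mulr2n; ring.
Qed.
Hypothesis wge0 : forall i j, 0 <= w i j.

Lemma term_ge0 (z : 'rV[K]_n) u v :
  0 <= RC (w u v) * ((z 0 u - z 0 v) * Num.conj (z 0 u - z 0 v)).
Proof. by apply: mulr_ge0; [rewrite ler0c | exact: mul_conjC_ge0]. Qed.

Lemma lap_psd (z : 'rV[K]_n) : 0 <= qf (map_mx RC (laplacian w)) z.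
Proof.
rewrite -(pmulrn_lge0 _ (isT : (0 < 2)%N)) lap_form.
by apply: sumr_ge0 => u _; apply: sumr_ge0 => v _; apply: term_ge0.
Qed.

Lemma lap_zero (z : 'rV[K]_n) : qf (map_mx RC (laplacian w)) z = 0 ->
  forall u v, 0 < w u v -> z 0 u = z 0 v.
Proof.
move=> q0 u v wpos.
have S0 : \sum_u \sum_v RC (w u v) * ((z 0 u - z 0 v) * Num.conj (z 0 u - z 0 v)) = 0.
  by rewrite -lap_form q0 mul0rn.
have Hu := @psumr_eq0P _ _ _ _ (fun u _ => sumr_ge0 _ (fun v _ => term_ge0 z u v)) S0 u isT.
have := @psumr_eq0P _ _ _ _ (fun v _ => term_ge0 z u v) Hu v isT.
move/eqP; rewrite mulf_eq0 (negbTE (lt0r_neq0 _)) ?ltcR //= mul_conjC_eq0 subr_eq0.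
by move/eqP.
Qed.

Lemma ct_map m p (M : 'M[R]_(m, p)) : (map_mx RC M)^t* = map_mx RC M^T.
Proof. by apply/matrixP => i j; rewrite !mxE conj_RC. Qed.

Lemma conn_eq (z : 'rV[K]_n) : qf (map_mx RC (laplacian w)) z = 0 ->
  forall x y, connect [rel a b | 0 < w a b] x y -> z 0 x = z 0 y.
Proof.
move=> q0 x y /connectP [p pth ->]; elim: p x pth => [|a p IH] x //= /andP [e pa].
by rewrite (lap_zero q0 e) IH.
Qed.

Hypothesis wconn : forall i j, connect [rel a b | 0 < w a b] i j.

Lemma deg_pos : (forall i : 'I_n, exists j, j != i) -> forall i, 0 < deg w i.
Proof.
move=> ex i; have [j ji] := ex i.
have /connectP [[|a p] /= pth jE] := wconn i j; first by rewrite jE eqxx in ji.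
case/andP: pth => e _.
rewrite /deg (bigD1 a) //=; apply: (lt_le_trans e); rewrite lerDl.
by apply: sumr_ge0 => k _.
Qed.

Lemma LFF_unit (C : {set 'I_n}) : C != set0 ->
  block_on (~:C) (~:C) (laplacian w) \in unitmx.
Proof.
move=> Cn0; rewrite unitmxE unitfE; apply/negP => /eqP d0.
have : \det (map_mx RC (block_on (~:C) (~:C) (laplacian w))) == 0.
  by rewrite det_map_mx d0 rmorph0.
case/det0P => v vnz vL.
set z := v *m map_mx RC (EC R (~:C)).
have q0 : qf (map_mx RC (laplacian w)) z = 0.
  have -> : qf (map_mx RC (laplacian w)) z = (v *m map_mx RC (EC R (~:C) *m laplacian w *m (EC R (~:C))^T) *m v^t*) 0 0.
    by rewrite /qf /z ct_mul ct_map !map_mxM !mulmxA.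
  rewrite -block_onE vL mul0mx mxE.
  by [].
have [c cC] : exists c, c \in C by apply/set0Pn.
have zc : z 0 c = 0.
  rewrite /z mxE; apply: big1 => j _; rewrite !mxE.
  case: eqP => [E|]; last by rewrite mulr0n rmorph0 mulr0.
  by have := enum_valP j; rewrite E inE cC.
have z0 : z = 0.
  by apply/rowP => u; rewrite (conn_eq q0 (wconn u c)) zc mxE.
move: vnz; have -> : v = z *m map_mx RC (EC R (~:C))^T.
  by rewrite /z -mulmxA -map_mxM ECECt map_mx1 mulmx1.
by rewrite z0 mul0mx eqxx.
Qed.

End K.


Section M.
Variable R : realType.
Local Notation K := (R[i]).
Local Notation RC := (real_complex R).

Lemma schur_sym n (M : 'M[R]_n) C : M^T = M -> (schur M C)^T = schur M C.
Proof.
move=> MT; rewrite /schur linearB /= !trmx_mul !tr_block MT trmx_inv tr_block MT.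
by rewrite !mulmxA.
Qed.

Lemma nl_sym n (w : 'M[R]_n) : (forall i j, w i j = w j i) ->
  (normalized_laplacian w)^T = normalized_laplacian w.
Proof.
move=> ws; rewrite /normalized_laplacian !trmx_mul lap_sym // /invsqrt_deg tr_diag_mx.
by rewrite mulmxA.
Qed.

Lemma B_sym n (w : 'M[R]_n) C : (forall i j, w i j = w j i) ->
  (invsqrt_deg_on w C *m schur (laplacian w) C *m invsqrt_deg_on w C)^T =
  invsqrt_deg_on w C *m schur (laplacian w) C *m invsqrt_deg_on w C.
Proof.
move=> ws; rewrite !trmx_mul schur_sym ?lap_sym // /invsqrt_deg_on tr_diag_mx.
by rewrite mulmxA.
Qed.

Lemma nrm_gt0 m (v : 'rV[K]_m) : v != 0 -> 0 < nrm v.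
Proof.
move=> vnz; rewrite lt_def; apply/andP; split; last first.
  by rewrite nrm_form; apply: sumr_ge0 => i _; exact: mul_conjC_ge0.
apply: contra vnz; rewrite nrm_form => /eqP S0; apply/eqP/rowP => i.
have := @psumr_eq0P _ _ _ _ (fun i _ => mul_conjC_ge0 (v 0 i)) S0 i isT.
by move/eqP; rewrite mul_conjC_eq0 mxE => /eqP.
Qed.


Lemma qf_map m p (y : 'rV[K]_m) (W : 'M[R]_(m, p)) (A : 'M[R]_p) :
  qf (map_mx RC A) (y *m map_mx RC W) = qf (map_mx RC (W *m A *m W^T)) y.
Proof. by rewrite /qf ct_mul ct_map !map_mxM !mulmxA. Qed.

Lemma nrm_map m p (y : 'rV[K]_m) (W : 'M[R]_(m, p)) :
  nrm (y *m map_mx RC W) = nrm y + qf (map_mx RC (W *m W^T - 1%:M)) y.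
Proof.
have entryB : forall M N : 'M[K]_(1, 1), (M - N) 0 0 = M 0 0 - N 0 0.
  by move=> M N; rewrite !mxE.
rewrite /nrm /qf ct_mul ct_map map_mxB map_mx1 mulmxBr mulmxBl mulmx1 entryB.
by rewrite !map_mxM !mulmxA addrC subrK.
Qed.

Lemma qf_diag_ge0 m (c : 'rV[K]_m) (dv : 'rV[R]_m) : (forall i, 0 <= dv 0 i) ->
  0 <= qf (map_mx RC (diag_mx dv)) c.
Proof.
move=> dge0; have -> : map_mx RC (diag_mx dv) = diag_mx (map_mx RC dv).
  by apply/matrixP => i j; rewrite !mxE rmorphMn.
rewrite /qf diag_form; apply: sumr_ge0 => i _; rewrite mxE.
by apply: mulr_ge0; [rewrite ler0c | exact: mul_conjC_ge0].
Qed.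

End M.


Local Notation RC R := (real_complex R).
Unset Implicit Arguments.
Theorem lemma4p3 (R : realType) (n : nat) (w : 'M[R]_n) (C : {set 'I_n})
    (nu lam : seq R) :
  weighted_graph w -> wconnected w ->
  ~: C != set0 -> (2 <= #|C|)%N ->
  is_spectrum (normalized_laplacian w) nu ->
  is_spectrum (invsqrt_deg_on w C *m schur (laplacian w) C *m invsqrt_deg_on w C) lam ->
  nu`_1 <= lam`_1.
Proof.
move=> [ws wge0 wdiag] wconn Fn0 C2 snu slam.
have [x [y [xC yC xy]]] : exists x y, [/\ x \in C, y \in C & x != y].
  by apply/card_gt1P.
have ex2 : forall i : 'I_n, exists j, j != i.
  move=> i; case: (eqVneq x i) => [xi|xi]; last by exists x.
  by exists y; rewrite -xi eq_sym.
have degpos := deg_pos wge0 wconn ex2.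
have Cn0 : C != set0 by apply/set0Pn; exists x.
have Lu := LFF_unit ws wge0 wconn Cn0.
have [PA [dA [PAu Adec Aperm]]] := spec_pack (nl_sym ws) snu.
have [PB [dB [PBu Bdec Bperm]]] := spec_pack (B_sym C ws) slam.
have szA : (1 < size nu)%N.
  rewrite (perm_size Aperm) size_map size_enum_ord.
  apply: leq_trans C2 _; rewrite -[X in (_ <= X)%N](card_ord n). exact: max_card.
have szB : (1 < size lam)%N by rewrite (perm_size Bperm) size_map size_enum_ord.
have [k Hk] := low_idx snu.1 Aperm szA.
have [j1 [j2 [j12 H1 H2]]] := up_idx slam.1 Bperm szB.
set Wk := map_mx (RC R) (Wm w C).
set e1 : 'rV[R[i]]_#|C| := delta_mx 0 j1.
set e2 : 'rV[R[i]]_#|C| := delta_mx 0 j2.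
set alpha := (e1 *m PB *m Wk *m PA^t*) 0 k.
set beta := (e2 *m PB *m Wk *m PA^t*) 0 k.
have [a [b [abnz hab]]] : exists a b : R[i], [/\ (a != 0) || (b != 0) & a * alpha + b * beta = 0].
  case: (eqVneq alpha 0) => [a0|an0].
    by exists 1, 0; rewrite oner_eq0 a0 /=; split => //; ring.
  by exists beta, (- alpha); rewrite oppr_eq0 an0 orbT; split => //; ring.
set cvec := a *: e1 + b *: e2.
have j21 : j2 != j1 by rewrite eq_sym.
have cv1 : cvec 0 j1 = a.
  by rewrite !mxE !eqxx (negbTE j12) /= mulr1n mulr0n; ring.
have cv2 : cvec 0 j2 = b.
  by rewrite !mxE !eqxx (negbTE j21) /= mulr1n mulr0n; ring.
have cvs : forall i, i != j1 -> i != j2 -> cvec 0 i = 0.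
  by move=> i i1 i2; rewrite !mxE (negbTE i1) (negbTE i2) /= mulr0n; ring.
have cnz : cvec != 0.
  case/orP: abnz => [anz|bnz]; apply/eqP => c0.
    by move: anz; rewrite -cv1 c0 mxE eqxx.
  by move: bnz; rewrite -cv2 c0 mxE eqxx.
set yv := cvec *m PB.
set wv := yv *m Wk.
have Hwk : (wv *m PA^t*) 0 k = 0.
  rewrite /wv /yv /cvec !mulmxDl -!scalemxAl.
  have lin : forall M N : 'rV[R[i]]_n, (a *: M + b *: N) 0 k = a * M 0 k + b * N 0 k.
    by move=> M N; rewrite !mxE.
  by rewrite lin.
have i1 := ray_low PAu Adec Hk Hwk.
have i3 := ray_up PBu Bdec cvs H1 H2.
have eqAB : qf (map_mx (RC R) (normalized_laplacian w)) wv =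
          qf (map_mx (RC R) (invsqrt_deg_on w C *m schur (laplacian w) C *m invsqrt_deg_on w C)) yv.
  by rewrite /wv /Wk qf_map (W_A degpos ws Lu).
have i4 : 0 <= qf (map_mx (RC R) (normalized_laplacian w)) wv.
  have -> : normalized_laplacian w = invsqrt_deg w *m laplacian w *m (invsqrt_deg w)^T.
    by rewrite /invsqrt_deg tr_diag_mx.
  by rewrite -qf_map; apply: lap_psd.
have ynz : yv != 0.
  apply: contra cnz => /eqP y0; apply/eqP.
  by rewrite -(mulmxtVK cvec PBu) -/yv y0 mul0mx.
have ypos := nrm_gt0 ynz.
have i5 : nrm yv <= nrm wv.
  rewrite /wv /Wk nrm_map (W_W degpos) [1%:M + _]addrC addrK lerDl -qf_map.
  rewrite /degmx block_diag; apply: qf_diag_ge0 => i; rewrite mxE.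
  by rewrite mxE; exact: ltW.
have i3' : qf (map_mx (RC R) (normalized_laplacian w)) wv <= RC R lam`_1 * nrm yv.
  by rewrite eqAB.
rewrite leNgt; apply/negP => lt.
have l0 : 0 <= RC R lam`_1.
  by rewrite -(pmulr_lge0 _ ypos); apply: le_trans i4 i3'.
have ltK : RC R lam`_1 < RC R nu`_1 by rewrite ltcR.
have nupos : 0 < RC R nu`_1 := le_lt_trans l0 ltK.
have : RC R lam`_1 * nrm yv < RC R lam`_1 * nrm yv.
  apply: (lt_le_trans _ i3'); apply: (lt_le_trans _ i1).
  apply: (@lt_le_trans _ _ (RC R nu`_1 * nrm yv)).
    by rewrite ltr_pM2r.
  by rewrite ler_pM2l.
by rewrite ltxx.
Qed.
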